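(* Let $R$ be a commutative ring with unit, $I$ an ideal of $R$, and $M$ an $R$-module. (1) If $I$ is principal, then $H_R(I,M)=0$. (2) If $R$ is an integral domain and $M$ is torsion-free, then $H_R(I,M)=0$. (3) If $R$ is a Dedekind domain, then $H_R(I,M)=0$. (4) If $R$ is a reduced ring with finitely many minimal prime ideals (in particular, a reduced noetherian ring), then $H_R(I,R)=0$.
   Context: $Z_R(I,M)=\{\varphi\in\mathrm{Hom}_R(I,M):\varphi(t)\in tM\text{ for all }t\in I\}$; $B_R(I,M)$ is the submodule of $\varphi\in Z_R(I,M)$ for which there exists $m\in M$ with $\varphi(t)=tm$ for all $t\in I$; $H_R(I,M)=Z_R(I,M)/B_R(I,M)$. *)

(* Defs.v *)
From HB Require Import structures.
From mathcomp Require Import all_boot all_order all_algebra.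
From mathcomp Require Import fraction.
Set Implicit Arguments. Unset Strict Implicit. Unset Printing Implicit Defensive.
Import Order.TTheory GRing.Theory Num.Theory.
Local Open Scope ring_scope.

Definition is_ideal (R : comPzRingType) (I : pred R) : Prop :=
  [/\ 0 \in I,
      (forall x y, x \in I -> y \in I -> x + y \in I) &
      (forall r x, x \in I -> r * x \in I)].

Definition principal_ideal (R : comPzRingType) (I : pred R) : Prop :=
  exists a : R, forall x, x \in I <-> exists r : R, x = r * a.

(* phi : R -> M represents an element of Hom_R(I,M): it is R-linear on I
   (values outside I are irrelevant). *)
Definition hom_on (R : comPzRingType) (M : lmodType R) (I : pred R)
  (phi : R -> M) : Prop :=
  forall r t s, t \in I -> s \in I -> phi (r * t + s) = r *: phi t + phi s.

Definition in_Z (R : comPzRingType) (M : lmodType R) (I : pred R)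
  (phi : R -> M) : Prop :=
  hom_on I phi /\ forall t, t \in I -> exists m : M, phi t = t *: m.

Definition in_B (R : comPzRingType) (M : lmodType R) (I : pred R)
  (phi : R -> M) : Prop :=
  in_Z I phi /\ exists m : M, forall t, t \in I -> phi t = t *: m.

(* H_R(I,M) = Z_R(I,M)/B_R(I,M) = 0, i.e. Z_R(I,M) = B_R(I,M). *)
Definition H_zero (R : comPzRingType) (M : lmodType R) (I : pred R) : Prop :=
  forall phi : R -> M, in_Z I phi -> in_B I phi.

Definition torsion_free (R : idomainType) (M : lmodType R) : Prop :=
  forall (r : R) (m : M), r *: m = 0 -> r = 0 \/ m = 0.

Definition prime_ideal (R : comPzRingType) (P : pred R) : Prop :=
  [/\ is_ideal P, 1 \notin P &
      forall a b, a * b \in P -> a \in P \/ b \in P].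

Definition maximal_ideal (R : comPzRingType) (P : pred R) : Prop :=
  [/\ is_ideal P, 1 \notin P &
      forall J : pred R, is_ideal J -> {subset P <= J} ->
        (forall x, x \in J <-> x \in P) \/ (forall x, x \in J)].

Definition noetherian (R : comPzRingType) : Prop :=
  forall I : pred R, is_ideal I ->
    exists s : seq R, forall x, x \in I <->
      exists c : 'I_(size s) -> R, x = \sum_(i < size s) c i * s`_i.

Definition integrally_closed (R : idomainType) : Prop :=
  forall x : {fraction R},
    (exists p : {poly R}, p \is monic /\ root (map_poly (@FracField.tofrac R) p) x) ->
    exists r : R, x = FracField.tofrac r.

Definition dedekind (R : idomainType) : Prop :=
  [/\ noetherian R, integrally_closed R &
      forall P : pred R, prime_ideal P -> (exists x, x \in P /\ x != 0) ->
        maximal_ideal P].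

Definition reduced (R : comPzRingType) : Prop :=
  forall (x : R) (n : nat), x ^+ n = 0 -> x = 0.

Definition minimal_prime (R : comPzRingType) (P : pred R) : Prop :=
  prime_ideal P /\
  forall Q : pred R, prime_ideal Q -> {subset Q <= P} -> {subset P <= Q}.

Definition finitely_many_minimal_primes (R : comPzRingType) : Prop :=
  exists (n : nat) (f : 'I_n -> pred R),
    forall P : pred R, minimal_prime P -> exists i, forall x, x \in P <-> x \in f i.

(* Main.v *)
Require Import Defs.
From HB Require Import structures.
From mathcomp Require Import all_boot all_order all_algebra.
From mathcomp Require Import fraction.
From mathcomp Require Import boolp classical_sets.
From mathcomp Require Import ring zify.
Import GRing.Theory.
Local Open Scope ring_scope.
Set Implicit Arguments. Unset Strict Implicit.


Section Basic.
Variables (R : comPzRingType) (M : lmodType R) (I : pred R).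

Lemma hom0 (phi : R -> M) : is_ideal I -> hom_on I phi -> phi 0 = 0.
Proof.
move=> [I0 _ _] h; have := h 1 0 0 I0 I0; rewrite mulr0 addr0 scale1r.
by move/(congr1 (fun x => x - phi 0)); rewrite subrr addrK => /esym.
Qed.

Lemma homM (phi : R -> M) r t : is_ideal I -> hom_on I phi -> t \in I ->
  phi (r * t) = r *: phi t.
Proof.
move=> hI h tI; have [I0 _ _] := hI.
by have := h r t 0 tI I0; rewrite addr0 (hom0 hI h) addr0.
Qed.

End Basic.

Lemma part1 (R : comPzRingType) (I : pred R) (M : lmodType R) :
  is_ideal I -> principal_ideal I -> H_zero M I.
Proof.
move=> hI [a ha] phi [hphi hZ]; split; first by [].
have aI : a \in I by apply/ha; exists 1; rewrite mul1r.
have [m hm] := hZ a aI; exists m => t tI.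
have [r ->] := (ha t).1 tI.
by rewrite (homM _ hI hphi aI) hm scalerA.
Qed.

Lemma part2 (R : idomainType) (I : pred R) (M : lmodType R) :
  is_ideal I -> torsion_free M -> H_zero M I.
Proof.
move=> hI tf phi [hphi hZ]; split; first by [].
have [nz|z] := pselect (exists a, a \in I /\ a != 0).
- have [a [aI a0]] := nz; have [m hm] := hZ a aI; exists m => t tI.
  have e : a *: (phi t - t *: m) = 0.
    rewrite scalerBr -(homM _ hI hphi tI) mulrC (homM _ hI hphi aI) hm.
    by rewrite !scalerA mulrC subrr.
  have [a0'|] := tf _ _ e; first by move: a0; rewrite a0' eqxx.
  by move/eqP; rewrite subr_eq0 => /eqP.
- exists 0 => t tI; rewrite scaler0.
  have [->|tn] := eqVneq t 0; first exact: hom0 hI hphi.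
  by case: z; exists t.
Qed.


Section MinPrime.
Variables (R : comPzRingType) (y : R).
Hypotheses (hred : reduced R) (hy : y != 0).

Let Y : set R := fun z => exists n, z = y ^+ n.
Let good (S : set R) := [/\ forall n, S (y ^+ n), forall a b, S a -> S b -> S (a*b) & ~ S 0].
Let Pz (B : set R) := good (B `|` Y)%classic.

Lemma good_pow S x n : good S -> S x -> S (x ^+ n).
Proof.
move=> [Sy SM _] Sx; elim: n => [|n IH]; first by have := Sy 0%N.
by rewrite exprS; apply: (SM).
Qed.

Lemma exists_max : exists S, good S /\ forall S', good S' -> (S `<=` S')%classic -> (S' `<=` S)%classic.
Proof.
have [A [PA Amax]] : exists A, Pz A /\ forall B, (A `<` B)%classic -> ~ Pz B.
  apply: Zorn_bigcup => F FP Ftot; split.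
  - by move=> n; right; exists n.
  - move=> a b [[Xa FXa Xaa]|[na ->]] [[Xb FXb Xbb]|[nb ->]].
    + have [Hs|Hs] := Ftot _ _ FXa FXb.
      * have [_ M _] := FP _ FXb.
        have [ab|ab] := M a b (or_introl (Hs _ Xaa)) (or_introl Xbb).
          by left; exists Xb.
        by right.
      * have [_ M _] := FP _ FXa.
        have [ab|ab] := M a b (or_introl Xaa) (or_introl (Hs _ Xbb)).
          by left; exists Xa.
        by right.
    + have [_ M _] := FP _ FXa.
      have [ab|ab] := M a (y ^+ nb) (or_introl Xaa) (or_intror (ex_intro _ nb erefl)).
        by left; exists Xa.
      by right.
    + have [_ M _] := FP _ FXb.
      have [ab|ab] := M (y ^+ na) b (or_intror (ex_intro _ na erefl)) (or_introl Xbb).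
        by left; exists Xb.
      by right.
    + by right; exists (na + nb)%N; rewrite exprD.
  - move=> [[X FX X0]|[n e]].
      by have [_ _ ] := FP _ FX; apply; left.
    by move/eqP: hy; apply; exact: (hred (esym e)).
exists (A `|` Y)%classic; split => // S' gS' AS'.
apply: contrapT => nS'; apply: (Amax S').
  split; first by move=> x Ax; apply: AS'; left.
  by move=> S'A; apply: nS' => x /S'A Ax; left.
rewrite /Pz; have -> : (S' `|` Y)%classic = S'; last exact: gS'.
by apply/setUidl => _ [n ->]; have [Sy _ _] := gS'.
Qed.


Lemma kill S : good S -> (forall S', good S' -> (S `<=` S')%classic -> (S' `<=` S)%classic) ->
  forall x, ~ S x -> exists s n, S s /\ s * x ^+ n = 0.
Proof.
move=> gS Smax x nSx; apply: contrapT => H.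
pose S' : set R := fun z => exists s n, S s /\ z = s * x ^+ n.
have [Sy SM S0] := gS.
have gS' : good S'.
  split.
  - by move=> n; exists (y ^+ n), 0%N; rewrite expr0 mulr1.
  - move=> a b [s1 [n1 [S1 ->]]] [s2 [n2 [S2 ->]]]; exists (s1 * s2), (n1 + n2)%N.
    by split; [exact: (SM) | rewrite exprD mulrACA].
  - by move=> [s [n [Ss e]]]; apply: H; exists s, n.
have Sx' : S' x by exists (y ^+ 0), 1%N; split; [exact: Sy | rewrite expr1 expr0 mul1r].
have SS' : (S `<=` S')%classic by move=> z Sz; exists z, 0%N; rewrite expr0 mulr1.
exact: nSx (Smax S' gS' SS' x Sx').
Qed.

End MinPrime.

Lemma minprime_avoid (R : comPzRingType) (y : R) : reduced R -> y != 0 ->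
  exists P : pred R, minimal_prime P /\ y \notin P.
Proof.
move=> hred hy; have [S [gS Smax]] := exists_max hred hy.
have kS := kill gS Smax; have [Sy SM S0] := gS.
have S1 : S 1 by have := Sy 0%N; rewrite expr0.
pose P : pred R := [pred x | `[< ~ S x >]].
have PE x : (x \in P) = `[< ~ S x >] by rewrite inE.
have idP : is_ideal P.
  split.
  - by rewrite PE; apply/asboolP.
  - move=> a b; rewrite !PE => /asboolP nSa /asboolP nSb; apply/asboolP => Sab.
    have [s1 [n1 [Ss1 e1]]] := kS _ nSa; have [s2 [n2 [Ss2 e2]]] := kS _ nSb.
    apply: S0; suff <- : s1 * s2 * (a + b) ^+ (n1 + n2) = 0.
      by apply: (SM); [exact: (SM) | exact: (good_pow _ gS Sab)].
    rewrite exprDn mulr_sumr big1 // => i _; rewrite mulrnAr.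
    suff -> : s1 * s2 * (a ^+ (n1 + n2 - i) * b ^+ i) = 0 by rewrite mul0rn.
    have [lt|ge] := ltnP i n2.
      rewrite (_ : (n1 + n2 - i = n1 + (n1 + n2 - i - n1))%N); last by lia.
      rewrite exprD; have -> : s1 * s2 * (a ^+ n1 * a ^+ (n1 + n2 - i - n1) * b ^+ i)
        = (s1 * a ^+ n1) * (s2 * a ^+ (n1 + n2 - i - n1) * b ^+ i) by ring.
      by rewrite e1 mul0r.
    rewrite (_ : i = (n2 + (i - n2))%N :> nat); last by lia.
    rewrite exprD; have -> : s1 * s2 * (a ^+ (n1 + n2 - (n2 + (i - n2))) * (b ^+ n2 * b ^+ (i - n2)))
        = (s2 * b ^+ n2) * (s1 * a ^+ (n1 + n2 - (n2 + (i - n2))) * b ^+ (i - n2)) by ring.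
    by rewrite e2 mul0r.
  - move=> r x; rewrite !PE => /asboolP nSx; apply/asboolP => Srx.
    have [s [n [Ss e]]] := kS _ nSx.
    apply: S0; suff <- : s * (r * x) ^+ n = 0 by apply: (SM) => //; exact: (good_pow _ gS Srx).
    by rewrite exprMn mulrCA e mulr0.
exists P; split; last by rewrite PE; apply/negP => /asboolP; apply; have := Sy 1%N; rewrite expr1.
split; first split.
- exact: idP.
- by rewrite PE; apply/negP => /asboolP.
- move=> a b; rewrite !PE => /asboolP nSab.
  have [Sa|nSa] := pselect (S a); last by left; apply/asboolP.
  have [Sb|nSb] := pselect (S b); last by right; apply/asboolP.
  by case: nSab; apply: (SM).
move=> Q [[Q0 QD QM] Q1 Qp] QP x xP.
pose SQ : set R := fun z => z \notin Q.
have gSQ : [/\ forall n, SQ (y ^+ n), forall a b, SQ a -> SQ b -> SQ (a*b) & ~ SQ 0].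
  split.
  - move=> n; apply/negP => /QP; rewrite PE => /asboolP; apply; exact: Sy.
  - move=> a b; rewrite /SQ => /negP na /negP nb; apply/negP => /Qp [] //.
  - by rewrite /SQ Q0.
have SSQ : (S `<=` SQ)%classic.
  by move=> z Sz; apply/negP => /QP; rewrite PE => /asboolP.
move: xP; rewrite PE => /asboolP nSx.
have [//|nQ] := boolP (x \in Q).
by case: nSx; apply: (Smax SQ gSQ SSQ).
Qed.

Fixpoint allL T (Q : T -> Prop) (L : seq T) : Prop :=
  if L is P :: L' then Q P /\ allL Q L' else True.

Lemma allL_mono T (Q1 Q2 Q3 : T -> Prop) L :
  (forall x, Q1 x -> Q2 x -> Q3 x) -> allL Q1 L -> allL Q2 L -> allL Q3 L.
Proof. by move=> H; elim: L => //= x L IH [h1 h1'] [h2 h2']; split; [apply: H|apply: IH]. Qed.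

Lemma allL_mapfilter (T : eqType) U (f : T -> U) (p : pred T) (Q : U -> Prop) s :
  (forall x, p x -> Q (f x)) -> allL Q [seq f x | x <- s & p x].
Proof. by move=> H; elim: s => //= x s IH; case: ifP => //= px; split; [apply: H|]. Qed.

Lemma allL_in (T : eqType) U (f : T -> U) (p : pred T) (Q : U -> Prop) s x :
  allL Q [seq f x | x <- s & p x] -> x \in s -> p x -> Q (f x).
Proof.
elim: s => //= z s IH; case: ifP => pz /=.
  by move=> [Qz H]; rewrite inE => /orP [/eqP ->|xs] // px; apply: IH.
by move=> H; rewrite inE => /orP [/eqP -> |xs] px; [rewrite px in pz | apply: IH].
Qed.

Section Avoid.
Variable (R : comPzRingType).

Lemma idealN (I : pred R) x : is_ideal I -> x \in I -> - x \in I.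
Proof. by move=> [_ _ IM] xI; rewrite -mulN1r; apply: IM. Qed.

Lemma idealMr (I : pred R) x r : is_ideal I -> x \in I -> x * r \in I.
Proof. by move=> [_ _ IM] xI; rewrite mulrC; apply: IM. Qed.

Lemma avoid_prod (P : pred R) (L : seq (pred R)) : prime_ideal P ->
  allL (@is_ideal R) L -> allL (fun Q => exists a, a \in Q /\ a \notin P) L ->
  exists w, w \notin P /\ allL (fun Q => w \in Q) L.
Proof.
move=> [PI P1 Pp]; elim: L => [|Q L IH] /=; first by move=> _ _; exists 1.
move=> [QI LI] [[a [aQ aP]] LP]; have [w [wP wL]] := IH LI LP.
exists (a * w); split.
  by apply/negP => /Pp [aP'|wP']; [rewrite aP' in aP | rewrite wP' in wP].
split; first exact: idealMr.
by apply: allL_mono wL LI => Q' wQ' Q'I; case: Q'I => _ _; apply.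
Qed.

Lemma prime_avoid (I : pred R) (L : seq (pred R)) : is_ideal I ->
  allL (fun P => minimal_prime P /\ exists s, s \in I /\ s \notin P) L ->
  exists t, t \in I /\ allL (fun P => t \notin P) L.
Proof.
move=> II; elim: L => [|P L IH] /=; first by move=> _; exists 0; case: II.
move=> [[Pmin [s [sI sP]]] LH]; have [t [tI tL]] := IH LH.
have [tP|tP] := boolP (t \in P); last by exists t.
have [[PI P1 Pp] Pm] := Pmin.
have LI : allL (@is_ideal R) L.
  by apply: allL_mono (LH) (LH) => Q [[[QI _ _] _] _] _.
have LP : allL (fun Q => exists a, a \in Q /\ a \notin P) L.
  apply: allL_mono (LH) (tL) => Q [[Qpr _] _] tQ.
  apply: contrapT => H; have QP : {subset Q <= P}.
    move=> z zQ; apply: contrapT => /negP zP; apply: H; by exists z.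
  by move: (Pm Q Qpr QP t tP); rewrite (negbTE tQ).
have [w [wP wL]] := avoid_prod (And3 PI P1 Pp) LI LP.
have [I0 ID IM] := II.
exists (t + w * s); split; first by apply: ID => //; apply: IM.
split.
  apply/negP => tws; have : w * s \in P.
    by rewrite (_ : w * s = - t + (t + w * s)); [case: (PI) => _ PD _; apply: PD => //; exact: (idealN PI tP) | rewrite addKr].
  by move/Pp => [wP'|sP']; [rewrite wP' in wP | rewrite sP' in sP].
apply: allL_mono (allL_mono (fun Q a b => conj a b) wL LI) tL => Q [wQ QI] tQ.
apply/negP => twsQ; move/negP: tQ; apply.
rewrite (_ : t = (t + w * s) + - (w * s)); last by rewrite addrK.
by case: (QI) => _ QD _; apply: QD => //; apply: idealN => //; apply: idealMr.
Qed.

End Avoid.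

Lemma homM' (R : comPzRingType) (M : lmodType R) (I : pred R) (phi : R -> M) r t :
  is_ideal I -> hom_on I phi -> t \in I -> phi (r * t) = r *: phi t.
Proof.
move=> hI h tI; have [I0 _ _] := hI.
have h0 : phi 0 = 0.
  have := h 1 0 0 I0 I0; rewrite mulr0 addr0 scale1r.
  by move/(congr1 (fun x => x - phi 0)); rewrite subrr addrK => /esym.
by have := h r t 0 tI I0; rewrite addr0 h0 addr0.
Qed.

Lemma part4 (R : comPzRingType) (I : pred R) :
  is_ideal I -> reduced R -> finitely_many_minimal_primes R -> H_zero R^o I.
Proof.
move=> II hred [n [f hf]] phi [hphi hZ]; split => //.
pose p := fun i : 'I_n => `[< minimal_prime (f i) /\ exists s, s \in I /\ s \notin f i >].
have LH := @allL_mapfilter _ _ f p (fun P => minimal_prime P /\ exists s, s \in I /\ s \notin P)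
   (enum 'I_n) (fun i => @asboolW _).
have [t [tI tL]] := prime_avoid II LH.
have [r hr] := hZ t tI.
exists r => s sI.
have scE (a : R) (b : R^o) : a *: b = a * b by [].
apply/eqP; rewrite -subr_eq0; apply/eqP.
set yv := phi s - s *: r.
apply: contrapT => /eqP ynz.
have [P [Pmin yP]] := minprime_avoid hred ynz.
have [[PI P1 Pp] Pm] := Pmin.
have [[s' [s'I s'P]]|nI] := pselect (exists s', s' \in I /\ s' \notin P).
- have [i hi] := hf P Pmin.
  have fiP : f i = P.
    by apply/funext => x; apply/idP/idP => h; [apply/(hi x).2 | apply/(hi x).1].
  have pi : p i by apply/asboolP; rewrite fiP; split => //; exists s'.
  have := allL_in tL (mem_enum _ i) pi; rewrite /= fiP => tP.
  have e : t * yv = 0.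
    rewrite /yv !scE mulrBr; have -> : t * phi s = phi (t * s) by rewrite (homM' _ II hphi sI).
    rewrite mulrC (homM' _ II hphi tI) hr !scE.
    by rewrite mulrCA mulrA subrr.
  have : t * yv \in P by rewrite e; case: PI.
  by move/Pp => [tP'|yP']; [rewrite tP' in tP | rewrite yP' in yP].
- have sub : {subset I <= P}.
    move=> z zI; apply: contrapT => /negP zP; apply: nI; by exists z.
  have [rs hs] := hZ s sI.
  have : yv \in P.
    rewrite /yv; case: (PI) => _ PD _; apply: PD.
      by rewrite hs scE; apply: idealMr => //; apply: sub.
    by rewrite scE; apply: idealN => //; apply: idealMr => //; apply: sub.
  by rewrite (negbTE yP).
Qed.


Section Noeth.
Variable R : comPzRingType.

Lemma ideal_sum (I : pred R) k (F : 'I_k -> R) :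
  is_ideal I -> (forall i, F i \in I) -> \sum_(i < k) F i \in I.
Proof.
move=> [I0 ID _] H; apply: (big_ind (fun x => x \in I)) => //.
Qed.

Definition toP (A : set R) : pred R := fun x => `[< A x >].
Definition setOf (I : pred R) : set R := fun x => x \in I.

Lemma toP_setOf I : toP (setOf I) = I.
Proof. by apply/funext => x; rewrite /toP /setOf asboolb. Qed.

Lemma noeth_max (F : pred R -> Prop) : noetherian R ->
  (forall I, F I -> is_ideal I) -> (exists I, F I) ->
  exists I, F I /\ forall J, F J -> {subset I <= J} -> {subset J <= I}.
Proof.
move=> hN FI [I0 FI0].
pose P' (A : set R) := A = set0 \/ F (toP A).
have [A [PA Amax]] : exists A, P' A /\ forall B, (A `<` B)%classic -> ~ P' B.
  apply: (@Zorn_bigcup R P') => G GP Gtot.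
  have [allE|nall] := pselect (forall X, G X -> X = set0).
    left; apply/seteqP; split => // x [X GX]; by rewrite (allE _ GX).
  have [X0 [GX0 X0n]] : exists X0, G X0 /\ X0 <> set0.
    apply: contrapT => H; apply: nall => X GX; apply: contrapT => Xn; apply: H; by exists X.
  have FX X : G X -> X <> set0 -> F (toP X).
    by move=> GX Xn; case: (GP _ GX).
  have XI X : G X -> X <> set0 -> is_ideal (toP X) by move=> GX Xn; apply: (FI); apply: (FX).
  have memX X x : G X -> X x -> is_ideal (toP X).
    by move=> GX Xx; apply: (XI) => // X0e; rewrite X0e in Xx.
  have inX X x : X x -> x \in toP X by move=> Xx; exact: (asboolT Xx).
  have ofX X x : x \in toP X -> X x by move=> h; exact: (asboolW h).
  pose U := (\bigcup_(X in G) X)%classic.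
  have UI : is_ideal (toP U).
    split.
    - have [x X0x] : exists x, X0 x.
        by apply: contrapT => H; apply: X0n; apply/seteqP; split => // x X0x; apply: H; exists x.
      have [I0' _ _] := memX _ _ GX0 X0x.
      by apply: (inX); exists X0 => //; apply: (ofX).
    - move=> a b /ofX [Xa GXa Xaa] /ofX [Xb GXb Xbb].
      have [sab|sba] := Gtot _ _ GXa GXb.
      + have [_ D _] := memX _ _ GXb Xbb.
        apply: (inX); exists Xb => //; apply: (ofX); apply: D; apply: (inX) => //; exact: sab.
      + have [_ D _] := memX _ _ GXa Xaa.
        apply: (inX); exists Xa => //; apply: (ofX); apply: D; apply: (inX) => //; exact: sba.
    - move=> r a /ofX [Xa GXa Xaa]; have [_ _ M] := memX _ _ GXa Xaa.
      apply: (inX); exists Xa => //; apply: (ofX); apply: M; exact: (inX).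
  have [s hs] := hN _ UI.
  have big : forall l : seq R, (forall z, z \in l -> U z) ->
      exists X, [/\ G X, X <> set0 & forall z, z \in l -> X z].
    elim => [|z l IH] H; first by exists X0.
    have [X [GX Xn Xl]] := IH (fun w wl => H w (mem_behead (s := z :: l) wl)).
    have [Xz GXz Xzz] : U z by apply: H; rewrite inE eqxx.
    have [sab|sba] := Gtot _ _ GX GXz.
    + exists Xz; split => // [e|w]; first by rewrite e in Xzz.
      by rewrite inE => /orP [/eqP ->|/Xl /sab].
    + exists X; split => // w; rewrite inE => /orP [/eqP ->|/Xl //]; exact: sba.
  have [X [GX Xn Xs]] : exists X, [/\ G X, X <> set0 & forall z, z \in s -> X z].
    apply: big => z zs; apply: (ofX); apply/(hs z).2.
    exists (fun i => if val i == index z s then 1 else 0).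
    have zi : (index z s < size s)%N by rewrite index_mem.
    rewrite (bigD1 (Ordinal zi)) //= eqxx mul1r big1 ?addr0.
      by rewrite nth_index.
    move=> i ne; case: eqP => e; last by rewrite mul0r.
    by case/negP: ne; apply/eqP; apply: val_inj; exact: e.
  have UX : U = X.
    apply/seteqP; split; last by move=> x Xx; exists X.
    move=> x /inX /(hs x).1 [c ->]; apply: (ofX); apply: ideal_sum; first exact: XI.
    move=> i; have [_ _ M] := XI _ GX Xn; apply: M; apply: (inX); apply: Xs.
    by apply: mem_nth.
  by right; rewrite -/U UX; apply: (FX).
have An : A <> set0.
  move=> Ae; apply: (Amax (setOf I0)); last by right; rewrite toP_setOf.
  rewrite Ae; split => // H; have [I00 _ _] := FI _ FI0.
  by have := H 0 I00.
have FA : F (toP A) by case: PA.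
exists (toP A); split => // J FJ AJ x xJ.
apply: contrapT => nx; apply: (Amax (setOf J)); last by right; rewrite toP_setOf.
split; first by move=> z Az; apply: AJ; exact: (asboolT Az).
move=> JA; apply: nx; exact: (asboolT (JA _ xJ)).
Qed.

End Noeth.


Lemma allL_cat T (Q : T -> Prop) L1 L2 : allL Q L1 -> allL Q L2 -> allL Q (L1 ++ L2).
Proof. by elim: L1 => //= x L IH [h1 h2] h3; split; [|apply: IH]. Qed.

Lemma allL_catl T (Q : T -> Prop) L1 L2 : allL Q (L1 ++ L2) -> allL Q L1 /\ allL Q L2.
Proof. by elim: L1 => //= x L IH [h1 /IH [h2 h3]]. Qed.

Section Prods.
Variable R : comPzRingType.

Fixpoint prods (L : seq (pred R)) (y : R) : Prop :=
  if L is P :: L' then exists x z, [/\ x \in P, prods L' z & y = x * z] else y = 1.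

Lemma prods_cat L1 L2 y : prods (L1 ++ L2) y ->
  exists y1 y2, [/\ prods L1 y1, prods L2 y2 & y = y1 * y2].
Proof.
elim: L1 y => [|P L IH] y /=; first by move=> h; exists 1, y; rewrite mul1r.
move=> [x [z [xP /IH [y1 [y2 [h1 h2 ->]]] ->]]].
by exists (x * y1), y2; split => //; [exists x, y1 | rewrite mulrA].
Qed.

Lemma prods_ins L1 Q L2 y q : prods (L1 ++ L2) y -> q \in Q -> prods (L1 ++ Q :: L2) (q * y).
Proof.
elim: L1 y => [|P L IH] y /=; first by move=> h qQ; exists q, y.
move=> [x [z [xP hz ->]]] qQ; exists x, (q * z); split => //; first exact: IH.
by rewrite mulrCA.
Qed.

Definition nzprime (P : pred R) := prime_ideal P /\ exists x, x \in P /\ x != 0.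

Definition covers (L : seq (pred R)) (I : pred R) := forall y, prods L y -> y \in I.

Lemma prime_prods : noetherian R -> forall I, is_ideal I -> (exists x, x \in I /\ x != 0) ->
  exists L, allL nzprime L /\ covers L I.
Proof.
move=> hN I II Inz; apply: contrapT => nL.
have [M [[MI [Mnz nM]] Mmax]] := @noeth_max R
  (fun J => is_ideal J /\ (exists x, x \in J /\ x != 0) /\ ~ exists L, allL nzprime L /\ covers L J)
  hN (fun J h => h.1) (ex_intro _ I (conj II (conj Inz nL))).
have [M0 MD MM] := MI.
have M1 : 1 \notin M.
  by apply/negP => M1; apply: nM; exists [::]; split => // y /= ->.
have [a [b [abM aM bM]]] : exists a b, [/\ a * b \in M, a \notin M & b \notin M].
  apply: contrapT => H; apply: nM; exists [:: M]; split.
    split => //; split => //; split => // a b abM.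
    have [aM|aM] := boolP (a \in M); first by left.
    have [bM|bM] := boolP (b \in M); first by right.
    by case: H; exists a, b.
  by move=> y /= [x [z [xM -> ->]]]; rewrite mulr1.
pose Ma (c : R) : pred R := fun x => `[< exists i r, i \in M /\ x = i + r * c >].
have MaI c : is_ideal (Ma c).
  split.
  - by apply: asboolT; exists 0, 0; rewrite M0 mul0r addr0.
  - move=> x y /asboolW [i [r [iM ->]]] /asboolW [j [s [jM ->]]].
    by apply: asboolT; exists (i + j), (r + s); split; [apply: MD | ring].
  - move=> u x /asboolW [i [r [iM ->]]]; apply: asboolT; exists (u * i), (u * r).
    by split; [apply: MM | ring].
have MMa c : {subset M <= Ma c}.
  by move=> x xM; apply: asboolT; exists x, 0; rewrite mul0r addr0.
have cMa c : c \in Ma c by apply: asboolT; exists 0, 1; rewrite add0r mul1r.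
have getL c : c \notin M -> exists L, allL nzprime L /\ covers L (Ma c).
  move=> cM; apply: contrapT => nLc.
  have : c \in M.
    apply: (Mmax (Ma c)) => //; split; first exact: MaI.
    split => //; have [x [xM x0]] := Mnz; exists x; split => //; exact: MMa.
  by rewrite (negbTE cM).
have [La [LaP La_c]] := getL _ aM; have [Lb [LbP Lb_c]] := getL _ bM.
apply: nM; exists (La ++ Lb); split; first exact: allL_cat.
move=> y /prods_cat [y1 [y2 [h1 h2 ->]]].
have /asboolW [i [r [iM ->]]] := La_c _ h1.
have /asboolW [j [s [jM ->]]] := Lb_c _ h2.
have -> : (i + r * a) * (j + s * b) = i * (j + s * b) + ((r * a) * j + (r * s) * (a * b)) by ring.
apply: (MD); first by rewrite mulrC; apply: (MM).
by apply: (MD); apply: (MM).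
Qed.

End Prods.

Section AddIdeal.
Variable R : comPzRingType.
Definition addI (M : pred R) (c : R) : pred R :=
  fun x => `[< exists i r, i \in M /\ x = i + r * c >].

Lemma addI_ideal M c : is_ideal M -> is_ideal (addI M c).
Proof.
move=> [M0 MD MM]; split.
- by apply: asboolT; exists 0, 0; rewrite M0 mul0r addr0.
- move=> x y /asboolW [i [r [iM ->]]] /asboolW [j [s [jM ->]]].
  by apply: asboolT; exists (i + j), (r + s); split; [apply: MD | ring].
- move=> u x /asboolW [i [r [iM ->]]]; apply: asboolT; exists (u * i), (u * r).
  by split; [apply: MM | ring].
Qed.

Lemma addI_sub M c : is_ideal M -> {subset M <= addI M c}.
Proof. by move=> [M0 _ _] x xM; apply: asboolT; exists x, 0; rewrite mul0r addr0. Qed.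

Lemma addI_c M c : is_ideal M -> c \in addI M c.
Proof. by move=> [M0 _ _]; apply: asboolT; exists 0, 1; rewrite add0r mul1r. Qed.

Definition princ (a : R) : pred R := fun x => `[< exists r, x = r * a >].

Lemma princ_ideal a : is_ideal (princ a).
Proof.
split.
- by apply: asboolT; exists 0; rewrite mul0r.
- move=> x y /asboolW [r ->] /asboolW [s ->]; apply: asboolT; exists (r + s); ring.
- move=> u x /asboolW [r ->]; apply: asboolT; exists (u * r); ring.
Qed.

Lemma find_sub (P : pred R) L : prime_ideal P -> covers L P ->
  exists L1 Q L2, L = L1 ++ Q :: L2 /\ {subset Q <= P}.
Proof.
move=> [PI P1 Pp]; elim: L => [|Q L IH] hc.
  by have := hc 1 erefl; rewrite (negbTE P1).
have [sub|nsub] := pselect {subset Q <= P}; first by exists [::], Q, L.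
have [q [qQ qP]] : exists q, q \in Q /\ q \notin P.
  apply: contrapT => H; apply: nsub => z zQ; apply: contrapT => /negP zP.
  by apply: H; exists z.
have [|L1 [Q' [L2 [-> sub]]]] := IH.
  move=> y hy; have := hc (q * y) (ex_intro _ q (ex_intro _ y (And3 qQ hy erefl))).
  by move/Pp => [qP'|//]; rewrite qP' in qP.
by exists (Q :: L1), Q', L2.
Qed.

End AddIdeal.

Section LemmaA.
Variable R : idomainType.
Local Notation tf := (@FracField.tofrac R).

Lemma lemmaA (J : pred R) : dedekind R -> is_ideal J -> 1 \notin J ->
  (exists a, a \in J /\ a != 0) ->
  exists x : {fraction R}, (forall j, j \in J -> exists r, x * tf j = tf r) /\
    ~ (exists r, x = tf r).
Proof.
move=> [hN hIC hmax] JI J1 [a0 [a0J a00]].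
have [P [[PI [JP P1]] Pmax]] := @noeth_max R
  (fun K => is_ideal K /\ {subset J <= K} /\ 1 \notin K) hN (fun K h => h.1)
  (ex_intro _ J (conj JI (conj (fun x h => h) J1))).
have [P0 PD PM] := PI.
have get1 c : c \notin P -> exists i r, i \in P /\ 1 = i + r * c.
  move=> cP; apply: contrapT => n1.
  have n1' : 1 \notin addI P c by apply/negP => /asboolW.
  have : c \in P.
    apply: (Pmax (addI P c)); last exact: addI_c.
      split; first exact: addI_ideal.
      by split => //; move=> x /JP; exact: addI_sub.
    exact: addI_sub.
  by rewrite (negbTE cP).
have Pprime : prime_ideal P.
  split => // a b abP.
  have [aP|aP] := boolP (a \in P); first by left.
  have [bP|bP] := boolP (b \in P); first by right.
  have [i [r [iP e1]]] := get1 _ aP; have [j [s [jP e2]]] := get1 _ bP.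
  have : 1 \in P.
    have -> : 1 = i * (j + s * b) + ((r * a) * j + (r * s) * (a * b)).
      by rewrite -[1]mul1r {1}e1 e2; ring.
    apply: (PD); first by rewrite mulrC; apply: (PM).
    by apply: (PD); apply: (PM).
  by rewrite (negbTE P1).
pose A0 := princ a0.
have A0I : is_ideal A0 := princ_ideal a0.
have a0A0 : a0 \in A0 by apply: asboolT; exists 1; rewrite mul1r.
have [L0 [L0P L0c]] := prime_prods hN A0I (ex_intro _ a0 (conj a0A0 a00)).
pose pk := fun k => `[< exists L, size L = k /\ allL (@nzprime R) L /\ covers L A0 >].
have pkex : exists k, pk k by exists (size L0); apply: asboolT; exists L0.
case: (ex_minnP pkex) => k /asboolW [L [sL [LP Lc]]] kmin.
have A0P : {subset A0 <= P}.
  move=> x /asboolW [r ->]; apply: JP; case: JI => _ _; apply.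
  exact: a0J.
have [L1 [Q [L2 [LE QP]]]] := find_sub Pprime (fun y hy => A0P _ (Lc y hy)).
rewrite LE in LP sL Lc.
have [L1P [Qnz L2P]] := allL_catl LP.
have [QI Q1 Qp] := Qnz.1.
have [_ _ Qm] := hmax Q Qnz.1 Qnz.2.
have PQ : {subset P <= Q}.
  have [PQe|Pall] := Qm P PI QP; first by move=> x /PQe.
  by have := Pall 1; rewrite (negbTE P1).
have [y [hy yA]] : exists y, prods (L1 ++ L2) y /\ y \notin A0.
  apply: contrapT => H.
  have : (k <= size (L1 ++ L2))%N.
    apply: kmin; apply: asboolT; exists (L1 ++ L2); split => //; split.
      exact: allL_cat.
    move=> z hz; apply: contrapT => /negP zA; apply: H; by exists z.
  by rewrite -sL !size_cat /=; lia.
have tfa0 : tf a0 != 0 by rewrite tofrac_eq0.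
exists (tf y / tf a0); split.
  move=> j jJ; have jQ : j \in Q by apply: PQ; apply: JP.
  have /asboolW [r e] := Lc _ (prods_ins hy jQ).
  exists r; rewrite mulrAC -rmorphM (mulrC y) e rmorphM mulfK //.
move=> [r e]; move: yA; rewrite /A0 /princ; move/negP; apply; apply: asboolT.
exists r; apply/eqP; rewrite -tofrac_eq tofracM -e divfK //.
Qed.

End LemmaA.

Lemma span_mem (R : comPzRingType) (N : pred R) (s : seq R) :
  (forall x, x \in N <-> exists c : 'I_(size s) -> R, x = \sum_(i < size s) c i * s`_i) ->
  forall i : 'I_(size s), s`_i \in N.
Proof.
move=> hs i; apply/(hs _).2; exists (fun j => if j == i then 1 else 0).
rewrite (bigD1 i) //= eqxx mul1r big1 ?addr0 // => j /negbTE ->; exact: mul0r.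
Qed.

Section LemmaB.
Variable R : idomainType.
Local Notation tf := (@FracField.tofrac R).

Definition Iinv (I : pred R) (z : {fraction R}) :=
  forall t, t \in I -> exists r, z * tf t = tf r.

Lemma lemmaB (I : pred R) (x : {fraction R}) : noetherian R -> integrally_closed R ->
  is_ideal I -> (exists a, a \in I /\ a != 0) ->
  (forall z, Iinv I z -> Iinv I (x * z)) -> exists r, x = tf r.
Proof.
move=> hN hIC II [a [aI a0]] hx.
have tfa0 : tf a != 0 by rewrite tofrac_eq0.
pose N : pred R := fun r => `[< Iinv I (tf r / tf a) >].
have NI : is_ideal N.
  split.
  - by apply: asboolT => t tI; exists 0; rewrite !tofrac0 !mul0r.
  - move=> r1 r2 /asboolW h1 /asboolW h2; apply: asboolT => t tI.
    have [u1 e1] := h1 t tI; have [u2 e2] := h2 t tI.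
    by exists (u1 + u2); rewrite !tofracD !mulrDl e1 e2.
  - move=> c r /asboolW h; apply: asboolT => t tI.
    have [u e] := h t tI; exists (c * u).
    by rewrite !tofracM -e -!mulrA.
have [s hs] := hN _ NI.
have sN := span_mem hs.
have hc : forall i : 'I_(size s), exists c : 'I_(size s) -> R,
    x * tf s`_i = \sum_(j < size s) tf (c j) * tf s`_j.
  move=> i; have := sN i => /asboolW /hx h.
  have [u e] := h a aI.
  have e' : x * tf s`_i = tf u by rewrite -e mulrA divfK.
  have : u \in N.
    apply: asboolT; rewrite -e' -mulrA.
    exact: (hx _ (asboolW (sN i))).
  move/(hs u).1 => [c ec]; exists c.
  by rewrite e' ec rmorph_sum; apply: eq_bigr => j _; exact: rmorphM.
have [c hcf] := choice hc.
pose C : 'M[R]_(size s) := \matrix_(i, j) c j i.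
pose v : 'rV[{fraction R}]_(size s) := \row_j tf s`_j.
have hv : v *m map_mx tf C = x *: v.
  apply/rowP => j; rewrite !mxE hcf; apply: eq_bigr => i _.
  by rewrite !mxE mulrC.
have vn0 : v != 0.
  apply/negP => /eqP v0.
  have sz (i : 'I_(size s)) : s`_i = 0.
    have := congr1 (fun M : 'rV[{fraction R}]_(size s) => M 0 i) v0; rewrite !mxE => /eqP.
    by rewrite tofrac_eq0 => /eqP.
  have aN : a \in N.
    by apply: asboolT => t tI; exists t; rewrite divff // mul1r.
  have [ca eca] := (hs a).1 aN.
  move/eqP: a0; apply; rewrite eca big1 // => i _; by rewrite sz mulr0.
have ev : eigenvalue (map_mx tf C) x by apply/eigenvalueP; exists v.
rewrite eigenvalue_root_char -map_char_poly in ev.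
apply: hIC; exists (char_poly C); split => //; exact: char_poly_monic.
Qed.

End LemmaB.

Lemma hom0b (R : comPzRingType) (M : lmodType R) (I : pred R) (phi : R -> M) :
  is_ideal I -> hom_on I phi -> phi 0 = 0.
Proof.
move=> [I0 _ _] h; have := h 1 0 0 I0 I0; rewrite mulr0 addr0 scale1r.
by move/(congr1 (fun x => x - phi 0)); rewrite subrr addrK => /esym.
Qed.

Section Part3.
Variable R : idomainType.
Local Notation tf := (@FracField.tofrac R).

Lemma allL_map T U (f : T -> U) (Q1 : T -> Prop) (Q2 : U -> Prop) l :
  (forall x, Q1 x -> Q2 (f x)) -> allL Q1 l -> allL Q2 (map f l).
Proof. by move=> H; elim: l => //= x l IH [h1 h2]; split; [apply: H|apply: IH]. Qed.

Lemma tf_inj (a b : R) : tf a = tf b -> a = b.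
Proof. by move/eqP; rewrite tofrac_eq => /eqP. Qed.

Lemma invertible (I : pred R) : dedekind R -> is_ideal I -> (exists a, a \in I /\ a != 0) ->
  exists l : seq (R * {fraction R}), allL (fun p => p.1 \in I /\ Iinv I p.2) l /\
     \sum_(p <- l) tf p.1 * p.2 = 1.
Proof.
move=> hD II Inz; have [hN hIC _] := hD.
apply: contrapT => ninv.
pose Q := fun p : R * {fraction R} => p.1 \in I /\ Iinv I p.2.
pose J : pred R := fun r => `[< exists l, allL Q l /\ tf r = \sum_(p <- l) tf p.1 * p.2 >].
have JI : is_ideal J.
  split.
  - by apply: asboolT; exists [::]; rewrite big_nil tofrac0.
  - move=> x y /asboolW [l1 [h1 e1]] /asboolW [l2 [h2 e2]]; apply: asboolT.
    by exists (l1 ++ l2); split; [exact: allL_cat | rewrite big_cat tofracD e1 e2].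
  - move=> c x /asboolW [l [h e]]; apply: asboolT.
    exists (map (fun p => (p.1, tf c * p.2)) l); split.
      apply: allL_map h => p [p1 p2]; split => // t tI.
      by have [r er] := p2 t tI; exists (c * r); rewrite tofracM -er mulrA.
    by rewrite big_map tofracM e mulr_sumr; apply: eq_bigr => p _ /=; rewrite mulrCA.
have J1 : 1 \notin J.
  apply/negP => /asboolW [l [h e]]; apply: ninv; exists l; split => //.
have IJ : {subset I <= J}.
  move=> t tI; apply: asboolT; exists [:: (t, 1)]; split.
    split => //; split => // u uI; exists u; exact: mul1r.
  by rewrite big_cons big_nil addr0 mulr1.
have [a [aI a0]] := Inz.
have [x [xJ xR]] := lemmaA hD JI J1 (ex_intro _ a (conj (IJ _ aI) a0)).
apply: xR; apply: (lemmaB hN hIC II Inz) => z hz t tI.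
have [rho erho] := hz t tI.
have rJ : rho \in J.
  apply: asboolT; exists [:: (t, z)]; split; first by split => //; split.
  by rewrite big_cons big_nil addr0 -erho mulrC.
have [r er] := xJ _ rJ; exists r; by rewrite -mulrA erho.
Qed.

Lemma part3 (I : pred R) (M : lmodType R) :
  is_ideal I -> dedekind R -> H_zero M I.
Proof.
move=> II hD phi [hphi hZ]; split => //.
have [I0 ID IM] := II.
have [Inz|nz] := pselect (exists a, a \in I /\ a != 0); last first.
  exists 0 => t tI; rewrite scaler0.
  have [->|tn] := eqVneq t 0; first exact: hom0b II hphi.
  by case: nz; exists t.
have [l [hl el]] := invertible hD II Inz.
suff [m hm] : exists m : M, forall t, t \in I -> forall rho,
    tf rho = tf t * \sum_(p <- l) tf p.1 * p.2 -> rho \in I /\ phi rho = t *: m.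
  by exists m => t tI; apply: (proj2 (hm t tI t _)); rewrite el mulr1.
elim: l hl {el} => [|[a b] l IH] /=.
  move=> _; exists 0 => t tI rho; rewrite big_nil mulr0 => /eqP.
  rewrite tofrac_eq0 => /eqP ->; split => //; rewrite scaler0; exact: hom0b II hphi.
move=> [[/= aI hb] hl]; have [m' hm'] := IH hl.
have [ma hma] := hZ a aI; have [c ec] := hb a aI.
exists (c *: ma + m') => t tI rho; rewrite big_cons /= => erho.
have [eps eeps] := hb t tI.
have e' : tf (rho - eps * a) = tf t * \sum_(p <- l) tf p.1 * p.2.
  by rewrite tofracB tofracM erho -eeps; ring.
have [rI' ephi'] := hm' t tI _ e'.
have rhoE : rho = eps * a + (rho - eps * a) by ring.
have ea : eps * a = t * c.
  by apply: tf_inj; rewrite !tofracM -ec -eeps; ring.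
split; first by rewrite rhoE; apply: ID => //; apply: IM.
by rewrite rhoE hphi // ephi' hma scalerA ea scalerDr scalerA.
Qed.

End Part3.

Theorem proposition5p6 :
  (forall (R : comPzRingType) (I : pred R) (M : lmodType R),
      is_ideal I -> principal_ideal I -> H_zero M I) /\
  (forall (R : idomainType) (I : pred R) (M : lmodType R),
      is_ideal I -> torsion_free M -> H_zero M I) /\
  (forall (R : idomainType) (I : pred R) (M : lmodType R),
      is_ideal I -> dedekind R -> H_zero M I) /\
  (forall (R : comPzRingType) (I : pred R),
      is_ideal I -> reduced R -> finitely_many_minimal_primes R ->
      H_zero R^o I).
Proof.
split; first exact: part1.
split; first exact: part2.
split; first by move=> R I M II hD; exact: part3.
exact: part4.
Qed.
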